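(* Fix $\lambda>1$. There exists $\beta_0>0$ such that for every $\beta\in[0,\beta_0)$ there exists a value $\alpha_0=\alpha_0(\beta)>0$ such that the sequence $\{\alpha_j\}_{j\ge 0}$ generated from $\alpha_{-1}=0$ and this $\alpha_0$ by the recursion below, together with $a_j^*:=\lambda^{-j}\alpha_j$, satisfies $$a_j^*\approx \mathrm{const}(\beta)\cdot\lambda^{-j/3}\quad\text{as } j\to\infty,$$ i.e. there is a constant $C(\beta)>0$ with $a_j^*/(C(\beta)\lambda^{-j/3})\to 1$ as $j\to\infty$.
   Context: The recursion is as follows. For $\beta>0$ and $n\ge 0$: $$\alpha_{n+1}=-\frac{\lambda}{2\beta}\alpha_n+\sqrt{\Big(\frac{\lambda}{2\beta}\alpha_n\Big)^2+\frac{\lambda}{\beta}\big(\lambda^2\alpha_{n-1}^2+\beta\lambda\alpha_{n-1}\alpha_n+\alpha_n\big)}.$$ For $\beta=0$ and $n\ge0$: $\alpha_{n+1}=1+\lambda^2\frac{\alpha_{n-1}^2}{\alpha_n}$. (These recursions arise from seeking self-similar solutions $a_j(t)=a_j^*/(t-t_0)$ of the dyadic system $\frac{da_j}{dt}=\lambda^j a_{j-1}^2-\lambda^{j+1}a_ja_{j+1}+\beta(\lambda^j a_{j-1}a_j-\lambda^{j+1}a_{j+1}^2)$, $j\ge0$, with boundary condition $a_{-1}\equiv 0$; the relation $a_j^*\approx \mathrm{const}\cdot\lambda^{-j/3}$ means the ratio tends to $1$.) *)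

(* Defs.v *)
From Stdlib Require Import Reals.
From Coquelicot Require Import Coquelicot.
Open Scope R_scope.

(* One step of the recursion: given alpha_{n-1} (= am1) and alpha_n (= a),
   return alpha_{n+1}. *)
Definition alpha_step (lam beta am1 a : R) : R :=
  if Rlt_dec 0 beta then
    - (lam / (2 * beta)) * a
    + sqrt ((lam / (2 * beta) * a) ^ 2
            + (lam / beta) * (lam ^ 2 * am1 ^ 2 + beta * lam * am1 * a + a))
  else 1 + lam ^ 2 * (am1 ^ 2 / a).

(* alpha_pair lam beta a0 n = (alpha_{n-1}, alpha_n), starting from
   alpha_{-1} = 0, alpha_0 = a0. *)
Fixpoint alpha_pair (lam beta a0 : R) (n : nat) : R * R :=
  match n with
  | O => (0, a0)
  | S k => let p := alpha_pair lam beta a0 k in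
           (snd p, alpha_step lam beta (fst p) (snd p))
  end.

Definition alpha (lam beta a0 : R) (j : nat) : R := snd (alpha_pair lam beta a0 j).

Definition astar (lam beta a0 : R) (j : nat) : R := / lam ^ j * alpha lam beta a0 j.

(* Main.v *)
Require Import Defs.
From Stdlib Require Import Reals Lra Lia Psatz Classical.
From Coquelicot Require Import Coquelicot.
Open Scope R_scope.

Definition Sf (lam b m a : R) : R :=
  let Q := a + lam ^ 2 * m ^ 2 + lam ^ 2 * b * m * a in
  2 * Q / (a + sqrt (a ^ 2 + 4 * b * Q)).

Definition stp (lam b : R) (p : R * R) : R * R := (snd p, Sf lam b (fst p) (snd p)).

Fixpoint P (lam b : R) (p : R * R) (n : nat) : R * R :=
  match n with O => p | S k => stp lam b (P lam b p k) end.

Lemma P_shift lam b p n : P lam b p (S n) = P lam b (stp lam b p) n.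
Proof. induction n; simpl; [reflexivity| now rewrite <- IHn]. Qed.

Lemma nn4 lam b m a : 0 <= b -> 0 <= m -> 0 <= a -> 0 <= lam ^ 2 * b * m * a.
Proof. intros. assert (0 <= lam ^ 2) by apply pow2_ge_0.
  apply Rmult_le_pos; [apply Rmult_le_pos; [apply Rmult_le_pos|]|]; lra. Qed.

Lemma Sf_pos lam b m a : 0 <= b -> 0 <= m -> 0 < a -> 0 < Sf lam b m a.
Proof.
  intros hb hm ha. unfold Sf.
  assert (0 <= lam ^ 2 * m ^ 2) by (apply Rmult_le_pos; apply pow2_ge_0).
  assert (0 <= lam ^ 2 * b * m * a) by (apply nn4; lra).
  assert (0 <= sqrt (a ^ 2 + 4 * b * (a + lam ^ 2 * m ^ 2 + lam ^ 2 * b * m * a))) by apply sqrt_pos.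
  apply Rdiv_lt_0_compat; lra.
Qed.

Lemma Sf_id lam b m a : 0 <= b -> 0 <= m -> 0 < a ->
  a * Sf lam b m a + b * (Sf lam b m a) ^ 2 = a + lam ^ 2 * m ^ 2 + lam ^ 2 * b * m * a.
Proof.
  intros hb hm ha. unfold Sf.
  set (Q := a + lam ^ 2 * m ^ 2 + lam ^ 2 * b * m * a).
  assert (hQ : 0 < Q).
  { unfold Q. assert (0 <= lam ^ 2 * m ^ 2) by (apply Rmult_le_pos; apply pow2_ge_0).
    assert (0 <= lam ^ 2 * b * m * a) by (apply nn4; lra). lra. }
  assert (hD : 0 <= a ^ 2 + 4 * b * Q) by (assert (0 <= b * Q) by (apply Rmult_le_pos; lra); nra).
  set (t := sqrt (a ^ 2 + 4 * b * Q)).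
  assert (ht : t * t = a ^ 2 + 4 * b * Q) by (unfold t; apply sqrt_sqrt; exact hD).
  assert (t0 : 0 <= t) by apply sqrt_pos.
  assert (hd : a + t <> 0) by lra.
  apply (Rmult_eq_reg_r ((a + t) ^ 2)); [|apply pow_nonzero; exact hd].
  field_simplify; [|exact hd].
  replace (t ^ 2) with (a ^ 2 + 4 * b * Q) by (rewrite <- ht; ring). ring.
Qed.

Lemma quad_uniq a b x y : 0 < a -> 0 <= b -> 0 < x -> 0 < y ->
  a * x + b * x ^ 2 = a * y + b * y ^ 2 -> x = y.
Proof.
  intros ha hb hx hy h.
  assert (h2 : (x - y) * (a + b * (x + y)) = 0) by (rewrite <- (Rminus_diag_eq _ _ h); ring).
  apply Rmult_integral in h2. destruct h2 as [h2|h2]; [lra|].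
  assert (0 <= b * (x + y)) by (apply Rmult_le_pos; lra). lra.
Qed.

Lemma P_pos lam b p n : 0 <= b -> 0 <= fst p -> 0 < snd p ->
  0 <= fst (P lam b p n) /\ 0 < snd (P lam b p n).
Proof.
  intros hb h1 h2. induction n as [|n [IH1 IH2]]; simpl; [auto|].
  split; [lra|]. apply Sf_pos; auto.
Qed.

Lemma step_eq lam beta m a : 0 < lam -> 0 <= beta -> 0 <= m -> 0 < a ->
  alpha_step lam beta m a = Sf lam (beta / lam) m a.
Proof.
  intros hl hb hm ha. unfold alpha_step.
  destruct (Rlt_dec 0 beta) as [hb'|hb'].
  - set (Q := lam ^ 2 * m ^ 2 + beta * lam * m * a + a).
    assert (hQ : 0 < Q).
    { unfold Q. assert (0 <= lam ^ 2 * m ^ 2) by (apply Rmult_le_pos; apply pow2_ge_0).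
      assert (0 <= beta * lam * m * a) by (apply Rmult_le_pos; [apply Rmult_le_pos; [apply Rmult_le_pos|]|]; lra). lra. }
    set (c := lam / (2 * beta) * a).
    assert (hc : 0 < c) by (unfold c; apply Rmult_lt_0_compat; [apply Rdiv_lt_0_compat|]; lra).
    set (D := c ^ 2 + lam / beta * Q).
    assert (hD : c ^ 2 < D) by (unfold D; assert (0 < lam / beta * Q) by (apply Rmult_lt_0_compat; [apply Rdiv_lt_0_compat|]; lra); lra).
    assert (hs : sqrt D * sqrt D = D) by (apply sqrt_sqrt; nra).
    assert (hs2 : c < sqrt D).
    { rewrite <- (sqrt_pow2 c) by lra. apply sqrt_lt_1_alt; split; [nra|lra]. }
    set (x := - (lam / (2 * beta)) * a + sqrt D).
    assert (hxe : x = - c + sqrt D) by (unfold x, c; ring).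
    apply (quad_uniq a (beta / lam)); [lra| apply Rlt_le, Rdiv_lt_0_compat; lra | lra | apply Sf_pos; try lra; apply Rlt_le, Rdiv_lt_0_compat; lra |].
    rewrite Sf_id; [| apply Rlt_le, Rdiv_lt_0_compat; lra | lra | lra].
    rewrite hxe.
    assert (e1 : (-c + sqrt D) ^ 2 = c^2 - 2 * c * sqrt D + sqrt D * sqrt D) by ring.
    rewrite e1, hs. unfold D, c, Q. field. lra.
  - assert (beta = 0) by lra. subst beta. unfold Sf.
    replace (0 / lam) with 0 by (field; lra).
    replace (a ^ 2 + 4 * 0 * (a + lam ^ 2 * m ^ 2 + lam ^ 2 * 0 * m * a)) with (a ^ 2) by ring.
    rewrite sqrt_pow2 by lra. field. lra.
Qed.

Lemma alpha_pair_eq lam beta a0 n : 0 < lam -> 0 <= beta -> 0 < a0 ->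
  alpha_pair lam beta a0 n = P lam (beta / lam) (0, a0) n.
Proof.
  intros hl hb ha. assert (hb' : 0 <= beta / lam) by (apply Rmult_le_pos; [lra|apply Rlt_le, Rinv_0_lt_compat; lra]).
  induction n as [|n IH]; simpl; [reflexivity|].
  rewrite IH. destruct (P_pos lam (beta/lam) (0,a0) n hb') as [h1 h2]; simpl; try lra.
  unfold stp. f_equal. apply step_eq; auto.
Qed.

Section Cont.
Lemma cp_plus f g x : continuity_pt f x -> continuity_pt g x -> continuity_pt (fun t => f t + g t) x.
Proof. intros; exact (continuity_pt_plus f g x H H0). Qed.
Lemma cp_minus f g x : continuity_pt f x -> continuity_pt g x -> continuity_pt (fun t => f t - g t) x.
Proof. intros; exact (continuity_pt_minus f g x H H0). Qed.
Lemma cp_mult f g x : continuity_pt f x -> continuity_pt g x -> continuity_pt (fun t => f t * g t) x.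
Proof. intros; exact (continuity_pt_mult f g x H H0). Qed.
Lemma cp_div f g x : continuity_pt f x -> continuity_pt g x -> g x <> 0 -> continuity_pt (fun t => f t / g t) x.
Proof. intros; exact (continuity_pt_div f g x H H0 H1). Qed.
Lemma cp_const c x : continuity_pt (fun _ => c) x.
Proof. apply continuity_pt_const. intros a b; reflexivity. Qed.
Lemma cp_id x : continuity_pt (fun t => t) x.
Proof. apply continuity_pt_id. Qed.
Lemma cp_pow f x n : continuity_pt f x -> continuity_pt (fun t => f t ^ n) x.
Proof. intros H. induction n; simpl. apply cp_const. apply cp_mult; auto. Qed.
Lemma cp_sqrt f x : continuity_pt f x -> 0 <= f x -> continuity_pt (fun t => sqrt (f t)) x.
Proof. intros H h. exact (continuity_pt_comp f sqrt x H (continuity_pt_sqrt _ h)). Qed.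
End Cont.

Lemma Sf_cont lam B f g t0 : continuity_pt B t0 -> continuity_pt f t0 -> continuity_pt g t0 ->
  0 <= B t0 -> 0 <= f t0 -> 0 < g t0 ->
  continuity_pt (fun t => Sf lam (B t) (f t) (g t)) t0.
Proof.
  intros cB cf cg hB hf hg. unfold Sf.
  assert (cQ : continuity_pt (fun t => g t + lam ^ 2 * f t ^ 2 + lam ^ 2 * B t * f t * g t) t0).
  { repeat (apply cp_plus || apply cp_mult || apply cp_pow || apply cp_const); auto. }
  assert (hQ : 0 < g t0 + lam ^ 2 * f t0 ^ 2 + lam ^ 2 * B t0 * f t0 * g t0).
  { assert (0 <= lam ^ 2 * f t0 ^ 2) by (apply Rmult_le_pos; apply pow2_ge_0).
    assert (0 <= lam ^ 2 * B t0 * f t0 * g t0) by (apply nn4; lra). lra. }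
  apply cp_div.
  - apply cp_mult; [apply cp_const| exact cQ].
  - apply cp_plus; [exact cg|]. apply cp_sqrt.
    + apply cp_plus; [apply cp_pow; auto|]. apply cp_mult; [apply cp_mult; [apply cp_const|auto]|exact cQ].
    + assert (0 <= B t0 * (g t0 + lam ^ 2 * f t0 ^ 2 + lam ^ 2 * B t0 * f t0 * g t0)) by (apply Rmult_le_pos; lra).
      nra.
  - assert (0 <= sqrt (g t0 ^ 2 + 4 * B t0 * (g t0 + lam ^ 2 * f t0 ^ 2 + lam ^ 2 * B t0 * f t0 * g t0))) by apply sqrt_pos.
    lra.
Qed.

Lemma P_cont lam B M A t0 n : continuity_pt B t0 -> continuity_pt M t0 -> continuity_pt A t0 ->
  0 <= B t0 -> 0 <= M t0 -> 0 < A t0 ->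
  continuity_pt (fun t => fst (P lam (B t) (M t, A t) n)) t0 /\
  continuity_pt (fun t => snd (P lam (B t) (M t, A t) n)) t0.
Proof.
  intros cB cM cA hB hM hA. induction n as [|n [IH1 IH2]]; simpl; [auto|].
  split; [exact IH2|].
  destruct (P_pos lam (B t0) (M t0, A t0) n hB hM hA) as [h1 h2].
  apply (Sf_cont lam B (fun t => fst (P lam (B t) (M t, A t) n)) (fun t => snd (P lam (B t) (M t, A t) n))); auto.
Qed.

Lemma cp_pos f x : continuity_pt f x -> 0 < f x -> exists d, 0 < d /\ forall y, Rabs (y - x) < d -> 0 < f y.
Proof.
  intros H h. destruct (H (f x) h) as [d [hd Hd]].
  exists d. split; auto. intros y hy.
  destruct (Req_dec y x) as [->|ne]; auto.
  assert (hh : D_x no_cond x y /\ dist R_met y x < d).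
  { split; [split; [exact I| intro e; apply ne; now symmetry]| exact hy]. }
  specialize (Hd y hh). simpl in Hd. unfold R_dist in Hd.
  apply Rabs_def2 in Hd. lra.
Qed.

Lemma connect (PL PH : R -> Prop) A B : A < B -> PL A -> PH B ->
  (forall x, A <= x <= B -> PL x -> exists d, 0 < d /\ forall y, Rabs (y - x) < d -> PL y) ->
  (forall x, A <= x <= B -> PH x -> exists d, 0 < d /\ forall y, Rabs (y - x) < d -> PH y) ->
  (forall x, A <= x <= B -> PL x -> PH x -> False) ->
  exists x, A <= x <= B /\ ~ PL x /\ ~ PH x.
Proof.
  intros hAB hA hB oL oH dis.
  apply NNPP. intro Hn.
  assert (all : forall x, A <= x <= B -> PL x \/ PH x).
  { intros x hx. apply NNPP. intro h. apply Hn. exists x. split; [exact hx|]. split; intro; apply h; auto. }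
  set (E := fun x => A <= x <= B /\ forall y, A <= y <= x -> PL y).
  assert (bE : bound E) by (exists B; intros x [hx _]; lra).
  assert (nE : exists x, E x) by (exists A; split; [lra| intros y hy; replace y with A by lra; auto]).
  destruct (completeness E bE nE) as [s [ub lub]].
  assert (hAs : A <= s) by (apply ub; split; [lra|intros y hy; replace y with A by lra; auto]).
  assert (hsB : s <= B) by (apply lub; intros x [hx _]; lra).
  assert (below : forall y, A <= y < s -> PL y).
  { intros y hy. apply NNPP. intro hy'.
    assert (s <= y); [|lra]. apply lub. intros x [hx hx2].
    destruct (Rle_lt_dec x y) as [h|h]; auto. exfalso. apply hy'. apply hx2. lra. }
  destruct (all s (conj hAs hsB)) as [hs|hs].
  - destruct (oL s (conj hAs hsB) hs) as [d [hd Hd]].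
    destruct (Req_dec s B) as [e|ne].
    + subst s. apply (dis B); auto; lra.
    + set (s' := Rmin (s + d / 2) B).
      assert (s < s') by (unfold s'; apply Rmin_glb_lt; lra).
      assert (E s').
      { split; [split; [lra| unfold s'; apply Rmin_r]|].
        intros y hy. destruct (Rlt_le_dec y s) as [h|h]; [apply below; lra|].
        apply Hd. apply Rabs_def1; unfold s' in hy; assert (Rmin (s + d/2) B <= s + d/2) by apply Rmin_l; lra. }
      assert (s' <= s) by (apply ub; auto). lra.
  - destruct (oH s (conj hAs hsB) hs) as [d [hd Hd]].
    destruct (Req_dec s A) as [e|ne].
    + subst s. apply (dis A); auto; lra.
    + set (y := Rmax (s - d / 2) A).
      assert (y < s) by (unfold y; apply Rmax_lub_lt; lra).
      assert (A <= y) by (unfold y; apply Rmax_r).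
      apply (dis y); [lra| apply below; lra|].
      assert (s - d/2 <= y) by (unfold y; apply Rmax_l). apply Hd. apply Rabs_def1; lra.
Qed.

Lemma ln_div x y : 0 < x -> 0 < y -> ln (x / y) = ln x - ln y.
Proof. intros. unfold Rdiv. rewrite ln_mult, ln_Rinv; try lra. apply Rinv_0_lt_compat; lra. Qed.

Lemma ln_le x y : 0 < x -> x <= y -> ln x <= ln y.
Proof. intros hx [h|h]. apply Rlt_le, ln_increasing; lra. subst; lra. Qed.

Lemma ln_le_sub1 z : 0 < z -> ln z <= z - 1.
Proof.
  intros hz. assert (h := exp_ineq1_le (z - 1)). assert (e := exp_ln z hz).
  destruct (Rle_lt_dec (ln z) (z - 1)) as [h'|h']; auto.
  exfalso. assert (exp (z - 1) < exp (ln z)) by (apply exp_increasing; exact h'). lra.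
Qed.

Lemma ln_diff_le x y : 0 < y -> y <= x -> ln x - ln y <= (x - y) / y.
Proof.
  intros hy hxy. rewrite <- ln_div by lra.
  replace ((x - y) / y) with (x / y - 1) by (field; lra).
  apply ln_le_sub1. apply Rdiv_lt_0_compat; lra.
Qed.

Lemma ln_diff_ge x y : 0 < y -> y <= x -> (x - y) / x <= ln x - ln y.
Proof.
  intros hy hxy. assert (h := ln_le_sub1 (y / x) ltac:(apply Rdiv_lt_0_compat; lra)).
  rewrite ln_div in h by lra.
  replace ((x - y) / x) with (- (y / x - 1)) by (field; lra). lra.
Qed.

Lemma abs_ln_diff_1 X Y : 1 <= X -> 1 <= Y -> Rabs (ln X - ln Y) <= Rabs (X - Y).
Proof.
  intros hX hY. destruct (Rle_lt_dec Y X) as [h|h].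
  - assert (h1 := ln_diff_le X Y ltac:(lra) h).
    assert (0 <= ln X - ln Y) by (assert (ln Y <= ln X) by (apply ln_le; lra); lra).
    rewrite !Rabs_right by lra.
    assert ((X - Y) / Y <= X - Y).
    { unfold Rdiv. rewrite <- (Rmult_1_r (X - Y)) at 2. apply Rmult_le_compat_l; [lra|].
      rewrite <- Rinv_1. apply Rinv_le_contravar; lra. }
    lra.
  - assert (h1 := ln_diff_le Y X ltac:(lra) ltac:(lra)).
    assert (ln X <= ln Y) by (apply ln_le; lra).
    rewrite Rabs_left1 by lra. rewrite Rabs_left1 by lra.
    assert ((Y - X) / X <= Y - X).
    { unfold Rdiv. rewrite <- (Rmult_1_r (Y - X)) at 2. apply Rmult_le_compat_l; [lra|].
      rewrite <- Rinv_1. apply Rinv_le_contravar; lra. }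
    lra.
Qed.

Lemma abs_diff_le_ln x y R : 0 < x -> 0 < y -> x <= R -> y <= R -> Rabs (x - y) <= R * Rabs (ln x - ln y).
Proof.
  intros hx hy hxR hyR. destruct (Rle_lt_dec y x) as [h|h].
  - assert (h1 := ln_diff_ge x y hy h).
    assert (ln y <= ln x) by (apply ln_le; lra).
    rewrite !Rabs_right by lra.
    apply (Rmult_le_compat_l x) in h1; [|lra].
    replace (x * ((x - y) / x)) with (x - y) in h1 by (field; lra).
    assert (x * (ln x - ln y) <= R * (ln x - ln y)) by (apply Rmult_le_compat_r; lra). lra.
  - assert (h1 := ln_diff_ge y x hx ltac:(lra)).
    assert (ln x <= ln y) by (apply ln_le; lra).
    rewrite Rabs_left1 by lra. rewrite Rabs_left1 by lra.
    apply (Rmult_le_compat_l y) in h1; [|lra].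
    replace (y * ((y - x) / y)) with (y - x) in h1 by (field; lra).
    assert (y * (ln y - ln x) <= R * (ln y - ln x)) by (apply Rmult_le_compat_r; lra). lra.
Qed.

Lemma vstep lam rs R b m a x : 1 < lam -> 1 < rs -> rs ^ 3 = lam ^ 2 -> rs < R -> 0 <= b -> b * R <= 1/4 ->
  0 < m -> 0 < a -> 0 < x ->
  a * x + b * x ^ 2 = a + lam ^ 2 * m ^ 2 + lam ^ 2 * b * m * a ->
  rs ^ 2 / R <= a / m <= R -> rs ^ 2 / R <= x / a <= R ->
  7/4 * Rabs (ln (a / m) - ln rs) <= 5/4 * Rabs (ln (x / a) - ln rs) + R ^ 2 / (lam ^ 2 * a).
Proof.
  intros hl hrs h3 hR hb hbR hm ha hx hid [w1 w2] [w3 w4].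
  assert (hr0 : 0 < rs ^ 2 / R) by (apply Rdiv_lt_0_compat; nra).
  set (rho := a / m) in *. set (rho' := x / a) in *.
  assert (hrho : 0 < rho) by lra. assert (hrho' : 0 < rho') by lra.
  set (T := lam ^ 2 / rho ^ 2 * (1 + b * rho)).
  assert (hbr : 0 <= b * rho) by (apply Rmult_le_pos; lra).
  assert (hbr' : 0 <= b * rho') by (apply Rmult_le_pos; lra).
  assert (hT : 0 < T) by (unfold T; apply Rmult_lt_0_compat; [apply Rdiv_lt_0_compat; nra|lra]).
  assert (E1 : rho' * (1 + b * rho') = / a + T).
  { unfold rho', T, rho. apply (Rmult_eq_reg_r (a ^ 2)); [|nra].
    field_simplify; try lra. }
  assert (hia : 0 < / a) by (apply Rinv_0_lt_compat; lra).
  assert (E2 : ln rho' + ln (1 + b * rho') = ln (/ a + T)) by (rewrite <- E1, ln_mult; lra).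
  set (e := ln (/ a + T) - ln T).
  assert (he0 : 0 <= e) by (unfold e; assert (ln T <= ln (/a + T)) by (apply ln_le; lra); lra).
  assert (he1 : e <= R ^ 2 / (lam ^ 2 * a)).
  { unfold e. eapply Rle_trans; [apply ln_diff_le; lra|].
    replace (/ a + T - T) with (/ a) by ring.
    unfold T. replace (/ a / (lam ^ 2 / rho ^ 2 * (1 + b * rho))) with (rho ^ 2 / (lam ^ 2 * a) / (1 + b * rho)) by (field; repeat split; intro; nra).
    assert (0 < lam ^ 2 * a) by (apply Rmult_lt_0_compat; [apply pow_lt; lra| lra]).
    apply Rle_trans with (rho ^ 2 / (lam ^ 2 * a)).
    - unfold Rdiv at 1. rewrite <- (Rmult_1_r (rho ^ 2 / (lam ^ 2 * a))) at 2. apply Rmult_le_compat_l.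
      + apply Rlt_le, Rdiv_lt_0_compat; nra.
      + rewrite <- Rinv_1. apply Rinv_le_contravar; lra.
    - unfold Rdiv. apply Rmult_le_compat_r; [apply Rlt_le, Rinv_0_lt_compat; lra|]. nra. }
  assert (ElnT : ln T = 3 * ln rs - 2 * ln rho + ln (1 + b * rho)).
  { unfold T. rewrite ln_mult, ln_div, !ln_pow; try lra; try nra.
    assert (ln (rs ^ 3) = ln (lam ^ 2)) by now rewrite h3.
    rewrite !ln_pow in H by lra. simpl INR in *. lra. apply Rdiv_lt_0_compat; nra. }
  set (v := ln rho - ln rs). set (v' := ln rho' - ln rs).
  set (d := ln (1 + b * rho) - ln (1 + b * rho')).
  assert (Ev : v' + 2 * v = d + e) by (unfold v, v', d, e; lra).
  assert (hd : Rabs d <= b * R * (Rabs v + Rabs v')).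
  { unfold d. eapply Rle_trans; [apply abs_ln_diff_1; lra|].
    replace (1 + b * rho - (1 + b * rho')) with (b * ((rho - rs) - (rho' - rs))) by ring.
    rewrite Rabs_mult, (Rabs_right b) by lra.
    assert (Rabs (rho - rs - (rho' - rs)) <= Rabs (rho - rs) + Rabs (rho' - rs)).
    { unfold Rminus at 1. eapply Rle_trans; [apply Rabs_triang|]. rewrite Rabs_Ropp. lra. }
    assert (Rabs (rho - rs) <= R * Rabs v) by (apply abs_diff_le_ln; lra).
    assert (Rabs (rho' - rs) <= R * Rabs v') by (apply abs_diff_le_ln; lra).
    replace (b * R * (Rabs v + Rabs v')) with (b * (R * Rabs v + R * Rabs v')) by ring.
    apply Rmult_le_compat_l; lra. }
  assert (h2v : 2 * Rabs v <= Rabs v' + Rabs d + e).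
  { replace (2 * Rabs v) with (Rabs (2 * v)) by (rewrite Rabs_mult, Rabs_right; lra).
    replace (2 * v) with ((d + e) - v') by lra.
    unfold Rminus. eapply Rle_trans; [apply Rabs_triang|]. rewrite Rabs_Ropp.
    eapply Rle_trans. apply Rplus_le_compat_r. apply Rabs_triang. rewrite (Rabs_right e) by lra. lra. }
  assert (0 <= b * R) by (apply Rmult_le_pos; lra).
  assert (b * R * Rabs v <= 1/4 * Rabs v) by (apply Rmult_le_compat_r; [apply Rabs_pos|lra]).
  assert (b * R * Rabs v' <= 1/4 * Rabs v') by (apply Rmult_le_compat_r; [apply Rabs_pos|lra]).
  fold v v'. lra.
Qed.

Lemma geom_bound (x : nat -> R) th D q M0 : 0 <= th < 1 -> 0 < q -> th * q < 1 -> 0 <= D ->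
  (forall n, (1 <= n)%nat -> 0 <= x n <= M0) ->
  (forall n, (1 <= n)%nat -> x n <= th * x (S n) + D * q ^ n) ->
  forall n, (1 <= n)%nat -> x n <= D / (1 - th * q) * q ^ n.
Proof.
  intros hth hq hthq hD hM hrec.
  set (K := D / (1 - th * q)).
  assert (hK : 0 <= K) by (unfold K; apply Rmult_le_pos; [lra| apply Rlt_le, Rinv_0_lt_compat; lra]).
  assert (hKe : th * q * K + D = K) by (unfold K; field; lra).
  assert (hM0 : 0 <= M0) by (destruct (hM 1%nat (le_n _)); lra).
  assert (main : forall J n, (1 <= n)%nat -> x n <= K * q ^ n + th ^ J * M0).
  { induction J as [|J IH]; intros n hn.
    - simpl. assert (0 <= K * q ^ n) by (apply Rmult_le_pos; [lra| apply pow_le; lra]).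
      destruct (hM n hn); lra.
    - eapply Rle_trans; [apply hrec; exact hn|].
      assert (h := IH (S n) ltac:(lia)).
      assert (th * x (S n) <= th * (K * q ^ S n + th ^ J * M0)) by (apply Rmult_le_compat_l; lra).
      simpl pow in *.
      replace (K * q ^ n + th * th ^ J * M0) with (th * (K * (q * q ^ n) + th ^ J * M0) + D * q ^ n).
      + lra.
      + rewrite <- hKe at 2. ring. }
  intros n hn. apply Rnot_lt_le. intro hlt.
  set (eps := x n - K * q ^ n).
  assert (heps : 0 < eps) by (unfold eps; lra).
  destruct (pow_lt_1_zero th ltac:(rewrite Rabs_right; lra) (eps / (M0 + 1)) ltac:(apply Rdiv_lt_0_compat; lra)) as [N HN].
  specialize (HN N (le_n _)). rewrite Rabs_right in HN by (apply Rle_ge, pow_le; lra).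
  assert (th ^ N * M0 < eps).
  { apply Rle_lt_trans with (th ^ N * (M0 + 1)).
    - apply Rmult_le_compat_l; [apply pow_le; lra| lra].
    - apply (Rmult_lt_compat_r (M0 + 1)) in HN; [|lra].
      replace (eps / (M0 + 1) * (M0 + 1)) with eps in HN by (field; lra). lra. }
  specialize (main N n hn). unfold eps in *. lra.
Qed.

Lemma cube_root c : 0 < c -> exists c1, 0 < c1 /\ c1 ^ 3 = c.
Proof.
  intros hc. exists (Rpower c (/ 3)). split.
  - unfold Rpower. apply exp_pos.
  - rewrite <- Rpower_pow by (unfold Rpower; apply exp_pos).
    rewrite Rpower_mult. replace (/ 3 * INR 3) with 1 by (simpl; field).
    apply Rpower_1; lra.
Qed.

Lemma cube_le u w : 0 < u -> 0 < w -> u ^ 3 <= w ^ 3 -> u <= w.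
Proof.
  intros hu hw h. apply Rnot_lt_le. intro hlt.
  assert (w ^ 3 < u ^ 3); [|lra].
  simpl. assert (0 < w * w) by nra. assert (w * w < u * u) by nra. nra.
Qed.

Definition OrbH (lam b : R) (al : nat -> R) :=
  (forall n, 0 < al n) /\
  (forall n, al (S n) * al (S (S n)) + b * al (S (S n)) ^ 2 =
             al (S n) + lam ^ 2 * al n ^ 2 + lam ^ 2 * b * al n * al (S n)).

Ltac fs := field; repeat split; try (intro; nra).

Lemma growth lam rs R b al : 1 < lam -> 1 < rs -> rs ^ 3 = lam ^ 2 -> rs < R -> 0 <= b ->
  OrbH lam b al ->
  (forall n, (1 <= n)%nat -> al (S n) / al n <= R) ->
  exists c1, 0 < c1 /\ forall n, (1 <= n)%nat -> c1 * rs ^ n <= al n.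
Proof.
  intros hl hrs h3 hR hb [hpos hrel] hwin.
  set (W := fun n => al (S n) * al n ^ 2 * (1 + b * (al (S n) / al n))).
  assert (hW0 : 0 < W 0%nat).
  { unfold W. assert (0 <= b * (al 1%nat / al 0%nat)) by (apply Rmult_le_pos; [lra| apply Rlt_le, Rdiv_lt_0_compat; auto]).
    specialize (hpos 0%nat) as h0. specialize (hpos 1%nat) as h1.
    apply Rmult_lt_0_compat; [apply Rmult_lt_0_compat; [auto| apply pow_lt; auto]| lra]. }
  assert (hWs : forall n, lam ^ 2 * W n <= W (S n)).
  { intro n. unfold W. specialize (hpos n) as h0. specialize (hpos (S n)) as h1. specialize (hpos (S (S n))) as h2.
    replace (al (S (S n)) * al (S n) ^ 2 * (1 + b * (al (S (S n)) / al (S n))))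
      with (al (S n) * (al (S n) * al (S (S n)) + b * al (S (S n)) ^ 2)) by fs.
    rewrite hrel.
    replace (lam ^ 2 * (al (S n) * al n ^ 2 * (1 + b * (al (S n) / al n))))
      with (al (S n) * (lam ^ 2 * al n ^ 2 + lam ^ 2 * b * al n * al (S n))) by fs.
    apply Rmult_le_compat_l; lra. }
  assert (hWn : forall n, (lam ^ 2) ^ n * W 0%nat <= W n).
  { induction n as [|n IH]; simpl; [lra|].
    eapply Rle_trans; [|apply hWs].
    rewrite Rmult_assoc. apply Rmult_le_compat_l; [apply pow_le; lra| exact IH]. }
  set (c0 := W 0%nat / (R * (1 + b * R))).
  assert (hc0 : 0 < c0) by (unfold c0; apply Rdiv_lt_0_compat; [lra| apply Rmult_lt_0_compat; nra]).
  destruct (cube_root c0 hc0) as [c1 [hc1 hc13]].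
  exists c1. split; auto. intros n hn.
  assert (hrn : 0 < rs ^ n) by (apply pow_lt; lra).
  apply cube_le; [nra| auto|].
  specialize (hpos n) as h0. specialize (hpos (S n)) as h1.
  assert (hWub : W n <= R * al n ^ 3 * (1 + b * R)).
  { unfold W. specialize (hwin n hn).
    assert (al (S n) <= R * al n) by (apply (Rmult_le_compat_r (al n)) in hwin; [|lra]; unfold Rdiv in hwin; rewrite Rmult_assoc, Rinv_l in hwin; lra).
    assert (b * (al (S n) / al n) <= b * R) by (apply Rmult_le_compat_l; lra).
    assert (0 <= b * (al (S n) / al n)) by (apply Rmult_le_pos; [lra| apply Rlt_le, Rdiv_lt_0_compat; auto]).
    assert (0 < al n ^ 2) by (apply pow_lt; auto).
    apply Rle_trans with (al (S n) * al n ^ 2 * (1 + b * R)).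
    - apply Rmult_le_compat_l; [apply Rlt_le, Rmult_lt_0_compat; auto| lra].
    - replace (R * al n ^ 3 * (1 + b * R)) with ((R * al n) * al n ^ 2 * (1 + b * R)) by ring.
      apply Rmult_le_compat_r; [nra|]. apply Rmult_le_compat_r; lra. }
  assert (e1 : (c1 * rs ^ n) ^ 3 = c0 * (lam ^ 2) ^ n) by (rewrite Rpow_mult_distr, hc13, <- h3, <- !pow_mult, Nat.mul_comm; reflexivity).
  rewrite e1. specialize (hWn n).
  unfold c0. assert (0 < R * (1 + b * R)) by nra.
  apply (Rmult_le_reg_r (R * (1 + b * R))); auto.
  replace (W 0%nat / (R * (1 + b * R)) * (lam ^ 2) ^ n * (R * (1 + b * R))) with ((lam ^ 2) ^ n * W 0%nat) by fs.
  nra.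
Qed.

Lemma C5a lam rs R b al : 1 < lam -> 1 < rs -> rs ^ 3 = lam ^ 2 -> rs < R -> 0 <= b -> b * R <= 1/4 ->
  OrbH lam b al ->
  (forall n, (1 <= n)%nat -> rs ^ 2 / R <= al (S n) / al n <= R) ->
  exists K, forall n, (1 <= n)%nat -> Rabs (ln (al (S n) / al n) - ln rs) <= K * (/ rs) ^ n.
Proof.
  intros hl hrs h3 hR hb hbR horb hwin.
  destruct (growth lam rs R b al hl hrs h3 hR hb horb ltac:(intros n hn; apply hwin; auto)) as [c1 [hc1 hg]].
  destruct horb as [hpos hrel].
  set (D := 4/7 * (R ^ 2 / (lam ^ 2 * c1 * rs))).
  assert (hl2 : 0 < lam ^ 2) by (apply pow_lt; lra).
  assert (hD : 0 <= D) by (unfold D; apply Rmult_le_pos; [lra| apply Rlt_le, Rdiv_lt_0_compat; [apply pow_lt; lra| apply Rmult_lt_0_compat; [apply Rmult_lt_0_compat|]; lra]]).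
  assert (hq : 0 < / rs) by (apply Rinv_0_lt_compat; lra).
  assert (hq1 : / rs < 1) by (rewrite <- Rinv_1; apply Rinv_lt_contravar; lra).
  exists (D / (1 - 5/7 * / rs)).
  apply (geom_bound (fun n => Rabs (ln (al (S n) / al n) - ln rs)) (5/7) D (/ rs) (ln R - ln rs)); try lra.
  - intros n hn. split; [apply Rabs_pos|].
    destruct (hwin n hn) as [w1 w2].
    assert (hr0 : 0 < rs ^ 2 / R) by (apply Rdiv_lt_0_compat; [apply pow_lt|]; lra).
    assert (ln (al (S n) / al n) <= ln R) by (apply ln_le; lra).
    assert (ln (rs ^ 2 / R) <= ln (al (S n) / al n)) by (apply ln_le; lra).
    rewrite ln_div, ln_pow in H0 by (try apply pow_lt; lra). simpl INR in H0.
    apply Rabs_le. lra.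
  - intros n hn.
    assert (h := vstep lam rs R b (al n) (al (S n)) (al (S (S n))) hl hrs h3 hR hb hbR (hpos _) (hpos _) (hpos _) (hrel n) (hwin n hn) (hwin (S n) ltac:(lia))).
    assert (hE : R ^ 2 / (lam ^ 2 * al (S n)) <= 7/4 * D * (/ rs) ^ n).
    { specialize (hg (S n) ltac:(lia)). specialize (hpos (S n)).
      assert (0 < c1 * rs ^ S n) by (apply Rmult_lt_0_compat; [lra| apply pow_lt; lra]).
      unfold D. rewrite <- Rinv_pow by lra. change (rs ^ S n) with (rs * rs ^ n) in *.
      replace (7 / 4 * (4 / 7 * (R ^ 2 / (lam ^ 2 * c1 * rs))) * / rs ^ n) with (R ^ 2 / (lam ^ 2 * (c1 * (rs * rs ^ n)))) by (field; split; [apply pow_nonzero|]; lra).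
      unfold Rdiv. apply Rmult_le_compat_l; [apply pow2_ge_0|].
      apply Rinv_le_contravar; [nra|]. apply Rmult_le_compat_l; lra. }
    lra.
Qed.

Lemma C5b lam rs R b al : 1 < lam -> 1 < rs -> rs ^ 3 = lam ^ 2 -> rs < R -> 0 <= b -> b * R <= 1/4 ->
  OrbH lam b al ->
  (forall n, (1 <= n)%nat -> rs ^ 2 / R <= al (S n) / al n <= R) ->
  exists C, 0 < C /\ is_lim_seq (fun n => al n / rs ^ n) C.
Proof.
  intros hl hrs h3 hR hb hbR horb hwin.
  destruct (C5a lam rs R b al hl hrs h3 hR hb hbR horb hwin) as [K HK].
  destruct horb as [hpos hrel].
  set (v := fun n => ln (al (S n) / al n) - ln rs).
  set (K' := Rmax (Rabs K) (Rabs (v 0%nat))).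
  assert (hq : 0 < / rs) by (apply Rinv_0_lt_compat; lra).
  assert (hq1 : / rs < 1) by (rewrite <- Rinv_1; apply Rinv_lt_contravar; lra).
  assert (hv : forall n, norm (v n) <= K' * (/ rs) ^ n).
  { intro n. change (norm (v n)) with (Rabs (v n)). destruct n as [|n].
    - simpl. rewrite Rmult_1_r. apply Rmax_r.
    - eapply Rle_trans; [apply (HK (S n)); lia|].
      apply Rmult_le_compat_r; [apply pow_le; lra|].
      eapply Rle_trans; [apply RRle_abs| apply Rmax_l]. }
  assert (hex : ex_series v).
  { apply (ex_series_le v (fun n => K' * (/ rs) ^ n)); auto.
    apply (ex_series_ext (fun n => scal K' ((/ rs) ^ n))); [reflexivity|].
    apply (@ex_series_scal_l R_AbsRing R_NormedModule K' (fun n => (/ rs) ^ n)). apply ex_series_geom. rewrite Rabs_right; lra. }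
  destruct hex as [Ssum HS].
  set (Lg := fun n => ln (al n) - INR n * ln rs).
  assert (hLg : forall n, Lg (S n) = Lg 0%nat + sum_n v n).
  { induction n as [|n IH].
    - rewrite sum_O. unfold Lg, v. rewrite ln_div by auto. simpl INR. ring.
    - rewrite sum_Sn. change (plus (sum_n v n) (v (S n))) with (sum_n v n + v (S n)).
      rewrite <- Rplus_assoc, <- IH. unfold Lg, v. rewrite ln_div by auto.
      rewrite !S_INR. ring. }
  exists (exp (Lg 0%nat + Ssum)). split; [apply exp_pos|].
  apply is_lim_seq_incr_1.
  apply (is_lim_seq_ext (fun n => exp (Lg 0%nat + sum_n v n))).
  - intro n. rewrite <- hLg. unfold Lg. unfold Rminus. rewrite exp_plus, exp_ln by auto.
    rewrite exp_Ropp. rewrite <- (Rpower_pow (S n) rs) by lra. reflexivity.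
  - apply (is_lim_seq_continuous exp (fun n => Lg 0%nat + sum_n v n)).
    + apply derivable_continuous_pt, derivable_exp.
    + apply is_lim_seq_plus'; [apply is_lim_seq_const| exact HS].
Qed.

Lemma prop_step lam rs R b th m a x : 1 < rs -> rs ^ 3 = lam ^ 2 -> rs < R -> 0 <= b -> b * R <= 1/4 ->
  0 < th -> / th + b * rs ^ 3 + rs ^ 3 / R <= rs ^ 2 -> 5/4 * rs <= R ->
  th <= m -> 0 < a -> 0 < x ->
  a * x + b * x ^ 2 = a + lam ^ 2 * m ^ 2 + lam ^ 2 * b * m * a ->
  (R * m < a -> x < rs ^ 2 / R * a) /\ (a < rs ^ 2 / R * m -> R * a < x).
Proof.
  intros hrs h3 hR hb hbR hth hc1 hc2 hm ha hx hid.
  rewrite <- h3 in hid.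
  assert (hR0 : 0 < R) by lra.
  assert (hm0 : 0 < m) by lra.
  assert (hbx : 0 <= b * x ^ 2) by (apply Rmult_le_pos; [lra| apply pow2_ge_0]).
  assert (hrs3 : 0 < rs ^ 3) by (apply pow_lt; lra).
  assert (hrs2 : 0 < rs ^ 2) by (apply pow_lt; lra).
  split.
  - intros h. apply Rnot_le_lt. intro hx2.
    assert (e1 : rs ^ 2 / R * a * a <= a * x) by (rewrite (Rmult_comm a x); apply Rmult_le_compat_r; lra).
    assert (t1 : R * a < a * a / th).
    { apply (Rmult_lt_reg_r th); [lra|]. replace (a * a / th * th) with (a * a) by (field; lra).
      assert (R * a * th <= R * a * m) by (apply Rmult_le_compat_l; nra). nra. }
    assert (t2 : R * (rs ^ 3 * m ^ 2) < rs ^ 3 * a * a / R).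
    { apply (Rmult_lt_reg_r R); [lra|]. replace (rs ^ 3 * a * a / R * R) with (rs ^ 3 * (a * a)) by (field; lra).
      replace (R * (rs ^ 3 * m ^ 2) * R) with (rs ^ 3 * ((R * m) * (R * m))) by ring.
      apply Rmult_lt_compat_l; [lra|]. assert (0 < R * m) by (apply Rmult_lt_0_compat; lra). nra. }
    assert (t3 : R * (rs ^ 3 * b * m * a) <= b * rs ^ 3 * a * a).
    { replace (R * (rs ^ 3 * b * m * a)) with ((b * rs ^ 3 * a) * (R * m)) by ring.
      apply Rmult_le_compat_l; [| lra]. apply Rmult_le_pos; [apply Rmult_le_pos|]; lra. }
    assert (t4 : a * a * (/ th + b * rs ^ 3 + rs ^ 3 / R) <= a * a * rs ^ 2) by (apply Rmult_le_compat_l; nra).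
    assert (R * (a + rs ^ 3 * m ^ 2 + rs ^ 3 * b * m * a) < R * (rs ^ 2 / R * a * a)).
    { replace (R * (rs ^ 2 / R * a * a)) with (a * a * rs ^ 2) by (field; lra).
      replace (a * a / th) with (a * a * / th) in t1 by (field; lra).
      replace (rs ^ 3 * a * a / R) with (a * a * (rs ^ 3 / R)) in t2 by (field; lra). nra. }
    apply Rmult_lt_reg_l in H; lra.
  - intros h. apply Rnot_le_lt. intro hx2.
    assert (e1 : a * x + b * x ^ 2 <= R * a * a * (1 + b * R)).
    { assert (a * x <= a * (R * a)) by (apply Rmult_le_compat_l; lra).
      assert (b * x ^ 2 <= b * (R * a) ^ 2) by (apply Rmult_le_compat_l; [lra| apply pow_incr; lra]).
      nra. }
    assert (e2 : a * R / rs ^ 2 < m).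
    { apply (Rmult_lt_reg_r (rs ^ 2 / R)); [apply Rdiv_lt_0_compat; lra|].
      replace (a * R / rs ^ 2 * (rs ^ 2 / R)) with a by (field; lra). lra. }
    assert (e3 : rs ^ 3 * (a * R / rs ^ 2) ^ 2 < rs ^ 3 * m ^ 2).
    { apply Rmult_lt_compat_l; [lra|]. assert (0 < a * R / rs ^ 2) by (apply Rdiv_lt_0_compat; nra). nra. }
    assert (e4 : rs ^ 3 * (a * R / rs ^ 2) ^ 2 = a * a * R * R / rs) by (field; lra).
    assert (e5 : R * a * a * (1 + b * R) <= a * a * R * R / rs).
    { replace (a * a * R * R / rs) with (R * a * a * (R / rs)) by (field; lra).
      apply Rmult_le_compat_l; [nra|]. apply (Rmult_le_reg_r rs); [lra|].
      replace (R / rs * rs) with R by (field; lra). nra. }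
    assert (0 <= rs ^ 3 * b * m * a) by (apply Rmult_le_pos; [apply Rmult_le_pos; [apply Rmult_le_pos|]|]; lra).
    lra.
Qed.

Lemma Sf_lb lam b th m a : 0 <= b -> 0 <= m -> 0 < a -> 0 < th -> b * th ^ 2 <= (1 - th) * a -> th <= Sf lam b m a.
Proof.
  intros hb hm ha hth h. apply Rnot_lt_le. intro hlt.
  assert (hx := Sf_pos lam b m a hb hm ha).
  assert (hid := Sf_id lam b m a hb hm ha).
  set (x := Sf lam b m a) in *.
  assert (0 <= lam ^ 2 * m ^ 2) by (apply Rmult_le_pos; apply pow2_ge_0).
  assert (0 <= lam ^ 2 * b * m * a) by (apply nn4; lra).
  assert (b * x ^ 2 <= b * th ^ 2) by (apply Rmult_le_compat_l; [lra| apply pow_incr; lra]).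
  assert (a * x < a * th) by (apply Rmult_lt_compat_l; lra).
  lra.
Qed.

Lemma lowb lam b th a0 : 0 <= b -> 0 < th < 1 -> b <= (1 - th) * Rmin 1 a0 -> 0 < a0 ->
  forall n, th <= snd (P lam b (0, a0) (S n)).
Proof.
  intros hb hth hbm ha0.
  assert (hm1 : Rmin 1 a0 <= 1) by apply Rmin_l.
  assert (hm2 : Rmin 1 a0 <= a0) by apply Rmin_r.
  assert (hm0 : 0 < Rmin 1 a0) by (apply Rmin_glb_lt; lra).
  induction n as [|n IH].
  - simpl. apply Sf_lb; try lra. simpl.
    assert (b * th ^ 2 <= b) by (rewrite <- (Rmult_1_r b) at 2; apply Rmult_le_compat_l; [lra|]; simpl; nra).
    assert ((1 - th) * Rmin 1 a0 <= (1 - th) * a0) by (apply Rmult_le_compat_l; lra). lra.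
  - change (P lam b (0, a0) (S (S n))) with (stp lam b (P lam b (0, a0) (S n))).
    destruct (P_pos lam b (0, a0) (S n) hb ltac:(simpl; lra) ltac:(simpl; lra)) as [h1 h2].
    set (p := P lam b (0, a0) (S n)) in *.
    change (th <= Sf lam b (fst p) (snd p)). apply Sf_lb; try lra.
    assert (b * th <= 1 - th) by (assert (b * th <= b) by (rewrite <- (Rmult_1_r b) at 2; apply Rmult_le_compat_l; lra);
                                  assert ((1 - th) * Rmin 1 a0 <= 1 - th) by (rewrite <- (Rmult_1_r (1 - th)) at 2; apply Rmult_le_compat_l; lra); lra).
    assert (b * th ^ 2 <= (1 - th) * th) by (simpl; nra).
    assert ((1 - th) * th <= (1 - th) * snd p) by (apply Rmult_le_compat_l; lra).
    lra.
Qed.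

Lemma Sf0 lam m a : 0 < a -> Sf lam 0 m a = (a + lam ^ 2 * m ^ 2) / a.
Proof.
  intros ha. unfold Sf.
  replace (a ^ 2 + 4 * 0 * (a + lam ^ 2 * m ^ 2 + lam ^ 2 * 0 * m * a)) with (a ^ 2) by ring.
  rewrite sqrt_pow2 by lra. field. lra.
Qed.

Lemma Sf00 lam a : 0 < a -> Sf lam 0 0 a = 1.
Proof. intros ha. rewrite Sf0 by lra. field. lra. Qed.

Definition Hc (Rb rb : R) (n : nat) (p : R * R) : Prop :=
  (Nat.even n = true /\ snd p > Rb * fst p) \/ (Nat.even n = false /\ snd p < rb * fst p).
Definition Lc (Rb rb : R) (n : nat) (p : R * R) : Prop :=
  (Nat.even n = true /\ snd p < rb * fst p) \/ (Nat.even n = false /\ snd p > Rb * fst p).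

Lemma Hc_Lc_S Rb rb n p : Hc Rb rb n p -> Lc Rb rb (S n) p.
Proof.
  unfold Hc, Lc. rewrite Nat.even_succ, <- Nat.negb_even.
  destruct (Nat.even n); simpl; intuition discriminate.
Qed.

Section Prop_sec.
Variables (lam rs R b th : R).
Hypotheses (hrs : 1 < rs) (h3 : rs ^ 3 = lam ^ 2) (hR : rs < R) (hb : 0 <= b) (hbR : b * R <= 1/4)
  (hth : 0 < th) (hc1 : / th + b * rs ^ 3 + rs ^ 3 / R <= rs ^ 2) (hc2 : 5/4 * rs <= R).

Lemma prop_pair n p : th <= fst p -> 0 < snd p ->
  (Hc R (rs ^ 2 / R) n p -> Hc R (rs ^ 2 / R) (S n) (stp lam b p)) /\
  (Lc R (rs ^ 2 / R) n p -> Lc R (rs ^ 2 / R) (S n) (stp lam b p)).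
Proof.
  intros h1 h2.
  assert (hx := Sf_pos lam b (fst p) (snd p) hb ltac:(lra) h2).
  assert (hid := Sf_id lam b (fst p) (snd p) hb ltac:(lra) h2).
  destruct (prop_step lam rs R b th (fst p) (snd p) (Sf lam b (fst p) (snd p)) hrs h3 hR hb hbR hth hc1 hc2 h1 h2 hx hid) as [pa pb].
  unfold Hc, Lc, stp; simpl fst; simpl snd. rewrite Nat.even_succ, <- Nat.negb_even.
  destruct (Nat.even n); split; intros [[e h]|[e h]]; try discriminate.
  all: first [ right; split; [reflexivity| apply pa; lra] | left; split; [reflexivity| apply Rlt_gt, pb; lra]
             | right; split; [reflexivity| apply Rlt_gt, pb; lra] | left; split; [reflexivity| apply pa; lra] ].
Qed.
End Prop_sec.

Definition HH lam Rb b a0 rs := exists n, (2 <= n)%nat /\ Hc Rb (rs ^ 2 / Rb) n (P lam b (0, a0) n).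
Definition LL lam Rb b a0 rs := exists n, (2 <= n)%nat /\ Lc Rb (rs ^ 2 / Rb) n (P lam b (0, a0) n).

Section Orbit_sec.
Variables (lam rs R b th a0 : R).
Hypotheses (hrs : 1 < rs) (h3 : rs ^ 3 = lam ^ 2) (hR : rs < R) (hb : 0 <= b) (hbR : b * R <= 1/4)
  (hth : 0 < th) (hth1 : th < 1) (hc1 : / th + b * rs ^ 3 + rs ^ 3 / R <= rs ^ 2) (hc2 : 5/4 * rs <= R)
  (hbm : b <= (1 - th) * Rmin 1 a0) (ha0 : 0 < a0).

Lemma fst_ge n : (2 <= n)%nat -> th <= fst (P lam b (0, a0) n) /\ 0 < snd (P lam b (0, a0) n).
Proof.
  intros hn. destruct n as [|[|k]]; try lia.
  split; [| apply P_pos; simpl; lra].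
  change (fst (P lam b (0, a0) (S (S k)))) with (snd (P lam b (0, a0) (S k))).
  apply lowb; auto.
Qed.

Lemma propag n : (2 <= n)%nat -> forall k,
  (Hc R (rs ^ 2 / R) n (P lam b (0, a0) n) -> Hc R (rs ^ 2 / R) (n + k) (P lam b (0, a0) (n + k))) /\
  (Lc R (rs ^ 2 / R) n (P lam b (0, a0) n) -> Lc R (rs ^ 2 / R) (n + k) (P lam b (0, a0) (n + k))).
Proof.
  intros hn k. induction k as [|k [IH1 IH2]].
  - rewrite Nat.add_0_r. auto.
  - rewrite Nat.add_succ_r. destruct (fst_ge (n + k) ltac:(lia)) as [f1 f2].
    destruct (prop_pair lam rs R b th hrs h3 hR hb hbR hth hc1 hc2 (n + k) _ f1 f2) as [q1 q2].
    split; intro h; [apply q1, IH1, h| apply q2, IH2, h].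
Qed.

Lemma disjoint : HH lam R b a0 rs -> LL lam R b a0 rs -> False.
Proof.
  intros [n [hn H1]] [m [hm H2]].
  set (k := Nat.max n m).
  assert (A1 := proj1 (propag n hn (k - n)) H1).
  assert (A2 := proj2 (propag m hm (k - m)) H2).
  replace (n + (k - n))%nat with k in A1 by lia.
  replace (m + (k - m))%nat with k in A2 by lia.
  destruct (fst_ge k ltac:(lia)) as [f1 f2].
  assert (rs ^ 2 / R < R).
  { apply (Rmult_lt_reg_r R); [lra|]. replace (rs ^ 2 / R * R) with (rs ^ 2) by (field; lra). simpl. nra. }
  assert (0 < fst (P lam b (0, a0) k)) by lra.
  unfold Hc, Lc in *.
  destruct A1 as [[e1 g1]|[e1 g1]]; destruct A2 as [[e2 g2]|[e2 g2]]; try congruence; nra.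
Qed.

Lemma good_window : ~ HH lam R b a0 rs -> ~ LL lam R b a0 rs ->
  forall n, (1 <= n)%nat -> rs ^ 2 / R <= snd (P lam b (0, a0) (S n)) / snd (P lam b (0, a0) n) <= R.
Proof.
  intros nH nL n hn.
  destruct (fst_ge (S n) ltac:(lia)) as [f1 f2].
  change (snd (P lam b (0, a0) n)) with (fst (P lam b (0, a0) (S n))).
  set (p := P lam b (0, a0) (S n)) in *.
  assert (hf : 0 < fst p) by lra.
  assert (hnH : ~ Hc R (rs ^ 2 / R) (S n) p) by (intro h; apply nH; exists (S n); split; [lia| exact h]).
  assert (hnL : ~ Lc R (rs ^ 2 / R) (S n) p) by (intro h; apply nL; exists (S n); split; [lia| exact h]).
  unfold Hc, Lc in *.
  assert (r1 : rs ^ 2 / R * fst p <= snd p /\ snd p <= R * fst p).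
  { destruct (Nat.even (S n)); split; apply Rnot_lt_le; intro h; try (apply hnH; auto; fail); try (apply hnL; auto; fail). }
  destruct r1 as [r1 r2]. split.
  - apply (Rmult_le_reg_r (fst p)); auto. unfold Rdiv at 2. rewrite Rmult_assoc, Rinv_l, Rmult_1_r; lra.
  - apply (Rmult_le_reg_r (fst p)); auto. unfold Rdiv. rewrite Rmult_assoc, Rinv_l, Rmult_1_r; lra.
Qed.

Lemma orbH : OrbH lam b (fun n => snd (P lam b (0, a0) n)).
Proof.
  split.
  - intro n. apply P_pos; simpl; lra.
  - intro n. change (snd (P lam b (0, a0) (S (S n)))) with (Sf lam b (fst (P lam b (0, a0) (S n))) (snd (P lam b (0, a0) (S n)))).
    change (fst (P lam b (0, a0) (S n))) with (snd (P lam b (0, a0) n)).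
    destruct (P_pos lam b (0, a0) n hb ltac:(simpl; lra) ltac:(simpl; lra)) as [_ g1].
    destruct (P_pos lam b (0, a0) (S n) hb ltac:(simpl; lra) ltac:(simpl; lra)) as [_ g2].
    apply Sf_id; lra.
Qed.
End Orbit_sec.

Lemma Sf0_mono lam m m' a a' : 0 <= m -> m <= m' -> 0 < a' -> a' <= a -> Sf lam 0 m a <= Sf lam 0 m' a'.
Proof.
  intros h1 h2 h3 h4. rewrite !Sf0 by lra.
  replace ((a + lam ^ 2 * m ^ 2) / a) with (1 + lam ^ 2 * m ^ 2 / a) by (field; lra).
  replace ((a' + lam ^ 2 * m' ^ 2) / a') with (1 + lam ^ 2 * m' ^ 2 / a') by (field; lra).
  apply Rplus_le_compat_l. unfold Rdiv.
  apply Rmult_le_compat; [apply Rmult_le_pos; apply pow2_ge_0| apply Rlt_le, Rinv_0_lt_compat; lra| |].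
  - apply Rmult_le_compat_l; [apply pow2_ge_0|]. apply pow_incr; lra.
  - apply Rinv_le_contravar; lra.
Qed.

Lemma mono0 lam k :
  (Nat.even k = true -> fst (P lam 0 (0, 1) k) <= fst (P lam 0 (1, 1) k) /\ snd (P lam 0 (1, 1) k) <= snd (P lam 0 (0, 1) k)) /\
  (Nat.even k = false -> fst (P lam 0 (1, 1) k) <= fst (P lam 0 (0, 1) k) /\ snd (P lam 0 (0, 1) k) <= snd (P lam 0 (1, 1) k)).
Proof.
  induction k as [|k [IH1 IH2]].
  - simpl. split; intro; [lra| discriminate].
  - destruct (P_pos lam 0 (0, 1) k ltac:(lra) ltac:(simpl; lra) ltac:(simpl; lra)) as [a1 a2].
    destruct (P_pos lam 0 (1, 1) k ltac:(lra) ltac:(simpl; lra) ltac:(simpl; lra)) as [b1 b2].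
    change (P lam 0 (0, 1) (S k)) with (stp lam 0 (P lam 0 (0, 1) k)).
    change (P lam 0 (1, 1) (S k)) with (stp lam 0 (P lam 0 (1, 1) k)).
    unfold stp. cbn [fst snd].
    rewrite Nat.even_succ, <- Nat.negb_even.
    destruct (Nat.even k) eqn:E; simpl negb; split; intro h; try discriminate.
    + destruct (IH1 eq_refl). split; [lra|]. apply Sf0_mono; lra.
    + destruct (IH2 eq_refl). split; [lra|]. apply Sf0_mono; lra.
Qed.

Lemma case3 lam rs R th : 1 < lam -> 1 < rs -> rs ^ 3 = lam ^ 2 -> rs < R ->
  0 < th -> th < 1 -> / th + 0 * rs ^ 3 + rs ^ 3 / R <= rs ^ 2 -> 5/4 * rs <= R ->
  ~ HH lam R 0 1 rs -> ~ LL lam R 0 1 rs -> False.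
Proof.
  intros hl hrs h3 hR hth hth1 hc1 hc2 nH nL.
  assert (hbm : 0 <= (1 - th) * Rmin 1 1) by (rewrite Rmin_left by lra; lra).
  assert (hw := good_window lam rs R 0 th 1 ltac:(lra) hth hth1 hbm ltac:(lra) nH nL).
  assert (ho := orbH lam 0 1 ltac:(lra) ltac:(lra)).
  destruct (C5a lam rs R 0 _ hl hrs h3 hR ltac:(lra) ltac:(lra) ho hw) as [K HK].
  assert (hlr : 0 < ln rs) by (rewrite <- ln_1; apply ln_increasing; lra).
  assert (hq : 0 < / rs) by (apply Rinv_0_lt_compat; lra).
  assert (hq1 : / rs < 1) by (rewrite <- Rinv_1; apply Rinv_lt_contravar; lra).
  destruct (pow_lt_1_zero (/ rs) ltac:(rewrite Rabs_right; lra) (ln rs / (Rabs K + 1)) ltac:(apply Rdiv_lt_0_compat; [lra| assert (0 <= Rabs K) by apply Rabs_pos; lra])) as [N HN].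
  set (k := (2 * (N + 1))%nat).
  assert (hk : Nat.even k = true) by (unfold k; apply Nat.even_mul).
  specialize (HN k ltac:(unfold k; lia)). rewrite Rabs_right in HN by (apply Rle_ge, pow_le; lra).
  specialize (HK k ltac:(unfold k; lia)).
  destruct (proj1 (mono0 lam k) hk) as [_ m2].
  assert (e : P lam 0 (1, 1) k = P lam 0 (0, 1) (S k)).
  { rewrite P_shift. unfold stp. simpl. rewrite Sf00 by lra. reflexivity. }
  rewrite e in m2.
  destruct (P_pos lam 0 (0, 1) k ltac:(lra) ltac:(simpl; lra) ltac:(simpl; lra)) as [_ g1].
  destruct (P_pos lam 0 (0, 1) (S k) ltac:(lra) ltac:(simpl; lra) ltac:(simpl; lra)) as [_ g2].
  assert (ln (snd (P lam 0 (0, 1) (S k)) / snd (P lam 0 (0, 1) k)) <= 0).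
  { apply Rle_trans with (ln 1); [| rewrite ln_1; lra]. apply ln_le; [apply Rdiv_lt_0_compat; lra|].
    apply (Rmult_le_reg_r (snd (P lam 0 (0, 1) k))); auto. unfold Rdiv. rewrite Rmult_assoc, Rinv_l; lra. }
  assert (ln rs <= Rabs (ln (snd (P lam 0 (0, 1) (S k)) / snd (P lam 0 (0, 1) k)) - ln rs)).
  { rewrite Rabs_left1 by lra. lra. }
  assert (K * (/ rs) ^ k <= Rabs K * (/ rs) ^ k) by (apply Rmult_le_compat_r; [apply pow_le; lra| apply RRle_abs]).
  assert (Rabs K * (/ rs) ^ k <= Rabs K * (ln rs / (Rabs K + 1))) by (apply Rmult_le_compat_l; [apply Rabs_pos| lra]).
  assert (Rabs K * (ln rs / (Rabs K + 1)) < ln rs).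
  { assert (0 <= Rabs K) by apply Rabs_pos.
    apply (Rmult_lt_reg_r (Rabs K + 1)); [lra|].
    replace (Rabs K * (ln rs / (Rabs K + 1)) * (Rabs K + 1)) with (Rabs K * ln rs) by (field; lra). nra. }
  lra.
Qed.

Lemma Hc_open Rb rb n (F : R -> R * R) t0 :
  continuity_pt (fun t => fst (F t)) t0 -> continuity_pt (fun t => snd (F t)) t0 ->
  Hc Rb rb n (F t0) -> exists d, 0 < d /\ forall t, Rabs (t - t0) < d -> Hc Rb rb n (F t).
Proof.
  intros c1 c2 [[e h]|[e h]].
  - destruct (cp_pos (fun t => snd (F t) - Rb * fst (F t)) t0) as [d [hd Hd]].
    + apply cp_minus; auto. apply cp_mult; auto. apply cp_const.
    + simpl. lra.
    + exists d; split; auto. intros t ht. left; split; auto. specialize (Hd t ht). simpl in Hd. lra.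
  - destruct (cp_pos (fun t => rb * fst (F t) - snd (F t)) t0) as [d [hd Hd]].
    + apply cp_minus; auto. apply cp_mult; auto. apply cp_const.
    + simpl. lra.
    + exists d; split; auto. intros t ht. right; split; auto. specialize (Hd t ht). simpl in Hd. lra.
Qed.

Lemma Lc_open Rb rb n (F : R -> R * R) t0 :
  continuity_pt (fun t => fst (F t)) t0 -> continuity_pt (fun t => snd (F t)) t0 ->
  Lc Rb rb n (F t0) -> exists d, 0 < d /\ forall t, Rabs (t - t0) < d -> Lc Rb rb n (F t).
Proof.
  intros c1 c2 [[e h]|[e h]].
  - destruct (cp_pos (fun t => rb * fst (F t) - snd (F t)) t0) as [d [hd Hd]].
    + apply cp_minus; auto. apply cp_mult; auto. apply cp_const.
    + simpl. lra.
    + exists d; split; auto. intros t ht. left; split; auto. specialize (Hd t ht). simpl in Hd. lra.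
  - destruct (cp_pos (fun t => snd (F t) - Rb * fst (F t)) t0) as [d [hd Hd]].
    + apply cp_minus; auto. apply cp_mult; auto. apply cp_const.
    + simpl. lra.
    + exists d; split; auto. intros t ht. right; split; auto. specialize (Hd t ht). simpl in Hd. lra.
Qed.

Lemma exists_L0 lam rs R th : 1 < lam -> 1 < rs -> rs ^ 3 = lam ^ 2 -> rs < R ->
  0 < th -> th < 1 -> / th + 0 * rs ^ 3 + rs ^ 3 / R <= rs ^ 2 -> 5/4 * rs <= R ->
  exists A, 0 < A /\ LL lam R 0 A rs.
Proof.
  intros hl hrs h3 hR hth hth1 hc1 hc2.
  destruct (classic (LL lam R 0 1 rs)) as [hL|nL]; [exists 1; split; [lra|auto]|].
  destruct (classic (HH lam R 0 1 rs)) as [hH|nH]; [| exfalso; apply (case3 lam rs R th); auto].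
  destruct hH as [n [hn Hn]].
  destruct (P_cont lam (fun _ => 0) (fun t => t) (fun _ => 1) 0 n (cp_const _ _) (cp_id _) (cp_const _ _)
              ltac:(lra) ltac:(lra) ltac:(lra)) as [c1 c2].
  destruct (Hc_open R (rs ^ 2 / R) n (fun t => P lam 0 (t, 1) n) 0 c1 c2 Hn) as [d [hd Hd]].
  exists (d / 2). split; [lra|].
  exists (S n). split; [lia|].
  rewrite P_shift. unfold stp; simpl fst; simpl snd. rewrite Sf00 by lra.
  apply Hc_Lc_S. apply Hd. rewrite Rminus_0_r, Rabs_right; lra.
Qed.

Lemma rs_facts lam : 1 < lam -> 1 < Rpower lam (2/3) /\ Rpower lam (2/3) ^ 3 = lam ^ 2.
Proof.
  intros hl. split.
  - unfold Rpower. rewrite <- exp_0. apply exp_increasing.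
    assert (0 < ln lam) by (rewrite <- ln_1; apply ln_increasing; lra). nra.
  - rewrite <- Rpower_pow by (unfold Rpower; apply exp_pos).
    rewrite Rpower_mult. rewrite <- Rpower_pow by lra. f_equal. simpl. field.
Qed.

Lemma conv_term lam rs C al j : 1 < lam -> rs = Rpower lam (2/3) -> 0 < C ->
  / lam ^ j * al / (C * Rpower lam (- INR j / 3)) = al / rs ^ j / C.
Proof.
  intros hl hrs hC.
  assert (e : lam ^ j * Rpower lam (- INR j / 3) = rs ^ j).
  { rewrite <- Rpower_pow by lra. rewrite <- Rpower_plus. subst rs.
    rewrite <- Rpower_pow by (unfold Rpower; apply exp_pos). rewrite Rpower_mult. f_equal. field. }
  assert (0 < lam ^ j) by (apply pow_lt; lra).
  assert (0 < Rpower lam (- INR j / 3)) by (unfold Rpower; apply exp_pos).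
  rewrite <- e. field. repeat split; lra.
Qed.

Lemma lt_div_helper beta lam c : 0 < lam -> beta < lam * c -> beta / lam < c.
Proof. intros hl h. apply (Rmult_lt_reg_r lam); auto. replace (beta / lam * lam) with beta by (field; lra). lra. Qed.

Theorem theorem1 (lam : R) (hlam : 1 < lam) :
  exists beta0 : R, 0 < beta0 /\
    forall beta : R, 0 <= beta -> beta < beta0 ->
      exists a0 : R, 0 < a0 /\
        exists C : R, 0 < C /\
          is_lim_seq
            (fun j : nat => astar lam beta a0 j / (C * Rpower lam (- INR j / 3)))
            1.
Proof.
  destruct (rs_facts lam hlam) as [hrs h3].
  set (rs := Rpower lam (2/3)) in *.
  set (g := rs ^ 2 - 1).
  assert (hg : 0 < g) by (unfold g; simpl; nra).
  set (th := 3 / (3 + g)).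
  assert (hth : 0 < th) by (unfold th; apply Rdiv_lt_0_compat; lra).
  assert (hth1 : th < 1) by (unfold th; apply (Rmult_lt_reg_r (3 + g)); [lra|]; field_simplify; lra).
  assert (hinv : / th = 1 + g / 3) by (unfold th; field; lra).
  assert (hrs3 : 0 < rs ^ 3) by (apply pow_lt; lra).
  set (R := 2 * rs + 3 * rs ^ 3 / g).
  assert (hR0 : 0 <= 3 * rs ^ 3 / g) by (apply Rlt_le, Rdiv_lt_0_compat; lra).
  assert (hR : rs < R) by (unfold R; lra).
  assert (hc2 : 5/4 * rs <= R) by (unfold R; lra).
  assert (hR3 : rs ^ 3 / R <= g / 3).
  { apply (Rmult_le_reg_r R); [lra|]. replace (rs ^ 3 / R * R) with (rs ^ 3) by (field; lra).
    unfold R. replace (g / 3 * (2 * rs + 3 * rs ^ 3 / g)) with (2 * rs * g / 3 + rs ^ 3) by (field; lra).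
    assert (0 < 2 * rs * g / 3) by (apply Rdiv_lt_0_compat; [nra| lra]). lra. }
  assert (hc1 : forall b, b * rs ^ 3 <= g / 3 -> / th + b * rs ^ 3 + rs ^ 3 / R <= rs ^ 2).
  { intros b hb. rewrite hinv. unfold g in *. lra. }
  destruct (exists_L0 lam rs R th hlam hrs h3 hR hth hth1 ltac:(apply hc1; lra) hc2) as [A [hA hLA]].
  assert (hHB : HH lam R 0 R rs).
  { exists 2%nat. split; [lia|]. left. split; [reflexivity|].
    change (P lam 0 (0, R) 2) with (stp lam 0 (stp lam 0 (0, R))).
    cbv [stp fst snd]. rewrite Sf00 by lra. rewrite Sf0 by lra.
    assert (1 < lam ^ 2) by (simpl; nra). assert (1 < R) by lra.
    assert (R * R < lam ^ 2 * (R * R)) by (rewrite <- (Rmult_1_l (R * R)) at 1; apply Rmult_lt_compat_r; nra).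
    replace ((1 + lam ^ 2 * R ^ 2) / 1) with (1 + lam ^ 2 * (R * R)) by (field). nra. }
  destruct hLA as [nA [hnA HA]]. destruct hHB as [nB [hnB HB]].
  assert (cb : continuity_pt (fun t => t / lam) 0) by (apply cp_div; [apply cp_id| apply cp_const| lra]).
  assert (hb00 : 0 <= 0 / lam) by (unfold Rdiv; rewrite Rmult_0_l; lra).
  assert (e0 : 0 / lam = 0) by (field; lra).
  destruct (P_cont lam (fun t => t / lam) (fun _ => 0) (fun _ => A) 0 nA cb (cp_const _ _) (cp_const _ _) hb00 ltac:(lra) hA) as [cA1 cA2].
  destruct (P_cont lam (fun t => t / lam) (fun _ => 0) (fun _ => R) 0 nB cb (cp_const _ _) (cp_const _ _) hb00 ltac:(lra) ltac:(lra)) as [cB1 cB2].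
  destruct (Lc_open R (rs ^ 2 / R) nA (fun t => P lam (t / lam) (0, A) nA) 0 cA1 cA2 ltac:(cbv beta; rewrite e0; exact HA)) as [dA [hdA HdA]].
  destruct (Hc_open R (rs ^ 2 / R) nB (fun t => P lam (t / lam) (0, R) nB) 0 cB1 cB2 ltac:(cbv beta; rewrite e0; exact HB)) as [dB [hdB HdB]].
  set (lo := Rmin A R).
  assert (hlo : 0 < lo) by (apply Rmin_glb_lt; lra).
  set (m1 := Rmin 1 lo).
  assert (hm1 : 0 < m1) by (apply Rmin_glb_lt; lra).
  set (c1 := / (4 * R)). set (c2 := g / (3 * rs ^ 3)). set (c3 := (1 - th) * m1).
  assert (hc1p : 0 < c1) by (apply Rinv_0_lt_compat; lra).
  assert (hc2p : 0 < c2) by (apply Rdiv_lt_0_compat; lra).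
  assert (hc3p : 0 < c3) by (apply Rmult_lt_0_compat; lra).
  exists (Rmin (Rmin dA dB) (Rmin (lam * c1) (Rmin (lam * c2) (lam * c3)))).
  split.
  { repeat apply Rmin_glb_lt; try lra; apply Rmult_lt_0_compat; lra. }
  intros beta hbe0 hbe.
  assert (hbA : beta < dA) by (eapply Rlt_le_trans; [exact hbe|]; eapply Rle_trans; apply Rmin_l).
  assert (hbB : beta < dB) by (eapply Rlt_le_trans; [exact hbe|]; eapply Rle_trans; [apply Rmin_l| apply Rmin_r]).
  assert (hb1 : beta < lam * c1) by (eapply Rlt_le_trans; [exact hbe|]; eapply Rle_trans; [apply Rmin_r| apply Rmin_l]).
  assert (hb2 : beta < lam * c2) by (eapply Rlt_le_trans; [exact hbe|]; eapply Rle_trans; [apply Rmin_r|]; eapply Rle_trans; [apply Rmin_r| apply Rmin_l]).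
  assert (hb3 : beta < lam * c3) by (eapply Rlt_le_trans; [exact hbe|]; eapply Rle_trans; [apply Rmin_r|]; eapply Rle_trans; [apply Rmin_r| apply Rmin_r]).
  set (b := beta / lam).
  assert (hb : 0 <= b) by (unfold b; apply Rmult_le_pos; [lra| apply Rlt_le, Rinv_0_lt_compat; lra]).
  assert (hbR : b * R <= 1/4).
  { assert (b < c1) by (apply lt_div_helper; lra). unfold c1 in *.
    apply Rlt_le. apply (Rmult_lt_compat_r R) in H; [|lra]. replace (/ (4 * R) * R) with (1/4) in H by (field; lra). lra. }
  assert (hbr3 : b * rs ^ 3 <= g / 3).
  { assert (b < c2) by (apply lt_div_helper; lra). unfold c2 in *.
    apply Rlt_le. apply (Rmult_lt_compat_r (rs ^ 3)) in H; [|lra]. replace (g / (3 * rs ^ 3) * rs ^ 3) with (g / 3) in H by (field; lra). lra. }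
  assert (hbc3 : b < c3) by (apply lt_div_helper; lra).
  assert (hLA : LL lam R b A rs).
  { exists nA. split; auto. apply (HdA beta). rewrite Rminus_0_r, Rabs_right; lra. }
  assert (hHB : HH lam R b R rs).
  { exists nB. split; auto. apply (HdB beta). rewrite Rminus_0_r, Rabs_right; lra. }
  assert (hbm : forall x, lo <= x -> b <= (1 - th) * Rmin 1 x).
  { intros x hx. apply Rlt_le. eapply Rlt_le_trans; [exact hbc3|]. unfold c3. apply Rmult_le_compat_l; [lra|].
    unfold m1. apply Rmin_glb; [apply Rmin_l| eapply Rle_trans; [apply Rmin_r| exact hx]]. }
  assert (hdisj : forall x, lo <= x -> LL lam R b x rs -> HH lam R b x rs -> False).
  { intros x hx hL hH. eapply (disjoint lam rs R b th x); eauto. lra. }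
  assert (hopL : forall x, lo <= x -> LL lam R b x rs -> exists d, 0 < d /\ forall y, Rabs (y - x) < d -> LL lam R b y rs).
  { intros x hx [n [hn Hn]].
    destruct (P_cont lam (fun _ => b) (fun _ => 0) (fun t => t) x n (cp_const _ _) (cp_const _ _) (cp_id _) hb ltac:(lra) ltac:(lra)) as [q1 q2].
    destruct (Lc_open R (rs ^ 2 / R) n (fun t => P lam b (0, t) n) x q1 q2 Hn) as [d [hd Hd]].
    exists d. split; auto. intros y hy. exists n. split; auto. }
  assert (hopH : forall x, lo <= x -> HH lam R b x rs -> exists d, 0 < d /\ forall y, Rabs (y - x) < d -> HH lam R b y rs).
  { intros x hx [n [hn Hn]].
    destruct (P_cont lam (fun _ => b) (fun _ => 0) (fun t => t) x n (cp_const _ _) (cp_const _ _) (cp_id _) hb ltac:(lra) ltac:(lra)) as [q1 q2].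
    destruct (Hc_open R (rs ^ 2 / R) n (fun t => P lam b (0, t) n) x q1 q2 Hn) as [d [hd Hd]].
    exists d. split; auto. intros y hy. exists n. split; auto. }
  assert (hgood : exists x, lo <= x /\ ~ LL lam R b x rs /\ ~ HH lam R b x rs).
  { assert (lo <= A) by apply Rmin_l. assert (lo <= R) by apply Rmin_r.
    destruct (Rtotal_order A R) as [hAR|[hAR|hAR]].
    - destruct (connect (fun x => LL lam R b x rs) (fun x => HH lam R b x rs) A R hAR hLA hHB) as [x [hx [n1 n2]]].
      + intros x hx. apply hopL. lra.
      + intros x hx. apply hopH. lra.
      + intros x hx. apply hdisj. lra.
      + exists x. split; [lra| auto].
    - exfalso. subst A. apply (hdisj R); auto.
    - destruct (connect (fun x => HH lam R b x rs) (fun x => LL lam R b x rs) R A hAR hHB hLA) as [x [hx [n1 n2]]].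
      + intros x hx. apply hopH. lra.
      + intros x hx. apply hopL. lra.
      + intros x hx h1 h2. apply (hdisj x); auto. lra.
      + exists x. split; [lra| auto]. }
  destruct hgood as [x [hx [nL nH]]].
  assert (hx0 : 0 < x) by lra.
  assert (hw := good_window lam rs R b th x hb hth hth1 (hbm x hx) hx0 nH nL).
  assert (ho := orbH lam b x hb hx0).
  destruct (C5b lam rs R b _ hlam hrs h3 hR hb hbR ho hw) as [C [hC HC]].
  exists x. split; auto. exists C. split; auto.
  apply (is_lim_seq_ext (fun j => snd (P lam b (0, x) j) / rs ^ j / C)).
  - intro j. unfold astar, alpha. rewrite alpha_pair_eq by lra. fold b.
    symmetry. apply conv_term; auto.
  - replace (Finite 1) with (Finite (C / C)) by (f_equal; field; lra).
    apply is_lim_seq_div'; [exact HC| apply is_lim_seq_const| lra].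
Qed.
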